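(* Let $\mathcal{B}$ be an abelian category and $f:V_1\to V_2$, $g:V_2\to V_3$ morphisms in $\mathcal{B}$. Let $(C,p)$ be the cokernel of $f$ (with $p:V_2\to C$) and $(K,i)$ the kernel of $g$ (with $i:K\to V_2$), and assume $p\circ i=0$. Then $$\widehat{\mathrm{Im}(f)}+\widehat{\mathrm{Im}(g)}=\widehat{V_2}+\widehat{\mathrm{Im}(g\circ f)}$$ in $K_0(\mathcal{B})$. Moreover, if $\mathcal{B}$ is the category of finite-dimensional vector spaces over a finite field $\mathbb{k}$, then $|\mathrm{Im}(f)|\cdot|\mathrm{Im}(g)|=|V_2|\cdot|\mathrm{Im}(g\circ f)|$.
   Context: $\widehat{V}$ denotes the class of an object $V$ in the Grothendieck group $K_0(\mathcal{B})$; $|V|$ denotes the cardinality of a finite set. *)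

(* Defs.v *)
From HB Require Import structures.
From mathcomp Require Import all_boot all_order all_algebra.

Set Implicit Arguments.
Unset Strict Implicit.
Unset Printing Implicit Defensive.

Import GRing.Theory.
Local Open Scope ring_scope.

Record preadditive := PreAdditive {
  Ob : Type;
  Mor : Ob -> Ob -> zmodType;
  mcomp : forall X Y Z : Ob, Mor Y Z -> Mor X Y -> Mor X Z;
  idm : forall X : Ob, Mor X X;
  compA : forall (X Y Z W : Ob) (h : Mor Z W) (g : Mor Y Z) (f : Mor X Y),
      mcomp h (mcomp g f) = mcomp (mcomp h g) f;
  comp1m : forall (X Y : Ob) (f : Mor X Y), mcomp (idm Y) f = f;
  compm1 : forall (X Y : Ob) (f : Mor X Y), mcomp f (idm X) = f;
  compDl : forall (X Y Z : Ob) (g g' : Mor Y Z) (f : Mor X Y),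
      mcomp (g + g') f = mcomp g f + mcomp g' f;
  compDr : forall (X Y Z : Ob) (g : Mor Y Z) (f f' : Mor X Y),
      mcomp g (f + f') = mcomp g f + mcomp g f'
}.

Arguments mcomp {p X Y Z} _ _.
Arguments idm {p} X.

Section AbelianDefs.
Variable C : preadditive.

Definition is_zero_obj (Z : Ob C) : Prop :=
  (forall X (f : Mor Z X), f = 0) /\ (forall X (f : Mor X Z), f = 0).

Definition mono (X Y : Ob C) (f : Mor X Y) : Prop :=
  forall W (h h' : Mor W X), mcomp f h = mcomp f h' -> h = h'.

Definition epi (X Y : Ob C) (f : Mor X Y) : Prop :=
  forall W (h h' : Mor Y W), mcomp h f = mcomp h' f -> h = h'.

Definition is_kernel (X Y K : Ob C) (f : Mor X Y) (k : Mor K X) : Prop :=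
  mcomp f k = 0 /\
  forall W (h : Mor W X), mcomp f h = 0 -> exists! u : Mor W K, mcomp k u = h.

Definition is_cokernel (X Y Q : Ob C) (f : Mor X Y) (c : Mor Y Q) : Prop :=
  mcomp c f = 0 /\
  forall W (h : Mor Y W), mcomp h f = 0 -> exists! u : Mor Q W, mcomp u c = h.

Definition is_biproduct (X Y P : Ob C) (i1 : Mor X P) (i2 : Mor Y P)
    (p1 : Mor P X) (p2 : Mor P Y) : Prop :=
  [/\ mcomp p1 i1 = idm X, mcomp p2 i2 = idm Y, mcomp p1 i2 = 0, mcomp p2 i1 = 0
    & mcomp i1 p1 + mcomp i2 p2 = idm P].

Record abelian : Prop := {
  ab_zero : exists Z : Ob C, is_zero_obj Z;
  ab_biprod : forall X Y : Ob C, exists (P : Ob C) (i1 : Mor X P) (i2 : Mor Y P)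
      (p1 : Mor P X) (p2 : Mor P Y), is_biproduct i1 i2 p1 p2;
  ab_ker : forall (X Y : Ob C) (f : Mor X Y), exists (K : Ob C) (k : Mor K X),
      is_kernel f k;
  ab_coker : forall (X Y : Ob C) (f : Mor X Y), exists (Q : Ob C) (c : Mor Y Q),
      is_cokernel f c;
  ab_mono_normal : forall (X Y : Ob C) (m : Mor X Y), mono m ->
      exists (Z : Ob C) (g : Mor Y Z), is_kernel g m;
  ab_epi_normal : forall (X Y : Ob C) (e : Mor X Y), epi e ->
      exists (Z : Ob C) (g : Mor Z X), is_cokernel g e
}.

Definition is_image (X Y : Ob C) (f : Mor X Y) (I : Ob C) : Prop :=
  exists (Q : Ob C) (c : Mor Y Q) (m : Mor I Y), is_cokernel f c /\ is_kernel c m.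

Definition short_exact (X Y Z : Ob C) (a : Mor X Y) (b : Mor Y Z) : Prop :=
  is_kernel b a /\ is_cokernel a b.

(* Additive invariants: maps from objects to an abelian group that are
   additive on short exact sequences.  These are exactly the group
   homomorphisms out of K_0(C) (universal property of K_0). *)
Definition additive_invariant (A : zmodType) (chi : Ob C -> A) : Prop :=
  forall (X Y Z : Ob C) (a : Mor X Y) (b : Mor Y Z),
    short_exact a b -> chi Y = chi X + chi Z.

(* K_0(C) = F / R with F free abelian on objects and R the relations
   [Y] - [X] - [Z] for short exact sequences; two elements of F are equal
   in F / R iff every homomorphism F -> A killing R takes the same value
   on them (take A = F / R). *)
Definition K0_eq (xs ys : seq (Ob C)) : Prop :=
  forall (A : zmodType) (chi : Ob C -> A), additive_invariant chi ->
    \sum_(x <- xs) chi x = \sum_(y <- ys) chi y.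

End AbelianDefs.

(* Main.v *)
Require Import Defs.
From HB Require Import structures.
From mathcomp Require Import all_boot all_order all_algebra.
Import GRing.Theory.
Local Open Scope ring_scope.
Set Implicit Arguments. Unset Strict Implicit.

Section Ab.
Variable C : preadditive.
Implicit Types X Y Z W A B I K Q Qg : Ob C.

Lemma comp0m X Y Z (f : Mor X Y) : mcomp (0 : Mor Y Z) f = 0.
Proof. by apply: (addrI (mcomp (0 : Mor Y Z) f)); rewrite -compDl !addr0. Qed.

Lemma compm0 X Y Z (g : Mor Y Z) : mcomp g (0 : Mor X Y) = 0.
Proof. by apply: (addrI (mcomp g (0 : Mor X Y))); rewrite -compDr !addr0. Qed.

Lemma compNm X Y Z (g : Mor Y Z) (f : Mor X Y) : mcomp (- g) f = - mcomp g f.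
Proof. by apply/eqP; rewrite -subr_eq0 opprK -compDl addNr comp0m. Qed.

Lemma compBm X Y Z (g g' : Mor Y Z) (f : Mor X Y) :
  mcomp (g - g') f = mcomp g f - mcomp g' f.
Proof. by rewrite compDl compNm. Qed.

Lemma mono_of_kernel X Y K (f : Mor X Y) (k : Mor K X) : is_kernel f k -> mono k.
Proof.
move=> [fk0 Hk] W h h' e.
have hz : mcomp f (mcomp k h) = 0 by rewrite Defs.compA fk0 comp0m.
case: (Hk W _ hz) => u [_ uniq].
by rewrite -(uniq h erefl) (uniq h' (esym e)).
Qed.

Lemma epi_from_zero X Y (e : Mor X Y) :
  (forall W (x : Mor Y W), mcomp x e = 0 -> x = 0) -> epi e.
Proof.
move=> H W h h' E; apply/eqP; rewrite -subr_eq0; apply/eqP/H.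
by rewrite compBm E subrr.
Qed.

Lemma mono_comp X Y Z (a : Mor Y Z) (b : Mor X Y) : mono a -> mono b -> mono (mcomp a b).
Proof. by move=> ma mb W h h' E; apply: mb; apply: ma; rewrite !Defs.compA. Qed.

Hypothesis hab : abelian C.

Lemma image_epi A B (g : Mor A B) Qg (cg : Mor B Qg) I (mg : Mor I B) (e : Mor A I) :
  is_cokernel g cg -> is_kernel cg mg -> mcomp mg e = g -> epi e.
Proof.
move=> [cgg0 Hcg] Hmg Eg.
have mmg := mono_of_kernel Hmg.
case: Hmg => cgmg0 Hmg.
apply: epi_from_zero => W x xe0.
case: (ab_coker hab e) => Wq [q [qe0 Hq]].
case: (ab_ker hab q) => Kq [kq Hkq].
have mkq := mono_of_kernel Hkq.
case: Hkq => qkq0 Hkq.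
case: (Hkq _ e qe0) => e' [Ee' _].
case: (ab_mono_normal hab (mono_comp mmg mkq)) => Z [z [zm0 Hz]].
have zg0 : mcomp z g = 0.
  by rewrite -Eg -Ee' Defs.compA Defs.compA -(Defs.compA z mg kq) zm0 comp0m.
case: (Hcg _ z zg0) => u [Eu _].
have zmg0 : mcomp z mg = 0 by rewrite -Eu -Defs.compA cgmg0 compm0.
case: (Hz _ mg zmg0) => v [Ev _].
have kqv : mcomp kq v = idm I.
  by apply: mmg; rewrite Defs.compA Ev compm1.
have q0 : q = 0 by rewrite -(compm1 q) -kqv Defs.compA qkq0 comp0m.
case: (Hq _ x xe0) => w [Ew _].
by rewrite -Ew q0 compm0.
Qed.

Lemma coker_of_epi_ker X Y K (e : Mor X Y) (i : Mor K X) :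
  epi e -> is_kernel e i -> is_cokernel i e.
Proof.
move=> ee [ei0 Hi].
case: (ab_epi_normal hab ee) => Z [h [eh0 Hh]].
split=> // W t ti0.
case: (Hi _ h eh0) => u [Eu _].
apply: Hh; by rewrite -Eu Defs.compA ti0 comp0m.
Qed.

Lemma kernel_transfer X Y (Y' : Ob C) K (g : Mor X Y) (g' : Mor X Y') (k : Mor K X) :
  (forall W (h : Mor W X), mcomp g h = 0 <-> mcomp g' h = 0) ->
  is_kernel g k -> is_kernel g' k.
Proof.
move=> H [gk0 Hk]; split; first by apply/H.
by move=> W h /H; apply: Hk.
Qed.

Lemma coker_transfer X (X' : Ob C) Y Q (g : Mor X Y) (g' : Mor X' Y) (c : Mor Y Q) :
  (forall W (h : Mor Y W), mcomp h g = 0 <-> mcomp h g' = 0) ->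
  is_cokernel g c -> is_cokernel g' c.
Proof.
move=> H [gk0 Hk]; split; first by apply/H.
by move=> W h /H; apply: Hk.
Qed.

Lemma ses_image A B K (g : Mor A B) (i : Mor K A) Qg (cg : Mor B Qg) I (mg : Mor I B) :
  is_kernel g i -> is_cokernel g cg -> is_kernel cg mg ->
  exists e : Mor A I, short_exact i e.
Proof.
move=> Hi Hcg Hmg.
have mmg := mono_of_kernel Hmg.
case: (proj2 Hmg _ g (proj1 Hcg)) => e [Ee _].
have ee := image_epi Hcg Hmg Ee.
have Hie : is_kernel e i.
  apply: kernel_transfer Hi => W h; split => H.
  - by apply: mmg; rewrite compm0 Defs.compA Ee.
  - by rewrite -Ee -Defs.compA H compm0.
by exists e; split=> //; apply: coker_of_epi_ker.
Qed.

End Ab.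

Lemma part1 :
  (forall (C : preadditive), abelian C ->
   forall (V1 V2 V3 : Ob C) (f : Mor V1 V2) (g : Mor V2 V3)
     (Q : Ob C) (p : Mor V2 Q) (K : Ob C) (i : Mor K V2),
   is_cokernel f p -> is_kernel g i -> mcomp p i = 0 ->
   forall (If Ig Igf : Ob C),
   is_image f If -> is_image g Ig -> is_image (mcomp g f) Igf ->
   K0_eq [:: If; Ig] [:: V2; Igf]).
Proof.
move=> C hab V1 V2 V3 f g Q p K i Hp Hi pi0 If Ig Igf
  [Qf [cf [mf [Hcf Hmf]]]] [Qg [cg [mg [Hcg Hmg]]]] [Q' [c' [m' [Hc' Hm']]]]
  A chi Hchi.
rewrite !big_cons !big_nil !addr0.
have [e1 S1] := ses_image hab Hi Hcg Hmg.
have E1 := Hchi _ _ _ _ _ S1.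
case: (proj2 Hmf _ f (proj1 Hcf)) => ef [Ef _].
have eef := image_epi hab Hcf Hmf Ef.
have mmf := mono_of_kernel Hmf.
have mi := mono_of_kernel Hi.
case: (proj2 Hp _ cf (proj1 Hcf)) => u [Eu _].
have cfi0 : mcomp cf i = 0 by rewrite -Eu -Defs.compA pi0 compm0.
case: (proj2 Hmf _ i cfi0) => j [Ej _].
have Hj : is_kernel (mcomp g mf) j.
  split; first by rewrite -Defs.compA Ej (proj1 Hi).
  move=> W h H.
  have H' : mcomp g (mcomp mf h) = 0 by rewrite Defs.compA.
  case: (proj2 Hi W _ H') => v [Ev uniq].
  exists v; split.
  - by apply: mmf; rewrite Defs.compA Ej Ev.
  - by move=> v' E'; apply: uniq; rewrite -Ej -Defs.compA E'.
have Hc'' : is_cokernel (mcomp g mf) c'.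
  apply: coker_transfer Hc' => W t; split => H.
  - apply: eef; rewrite comp0m -Defs.compA -Defs.compA Ef; exact: H.
  - by rewrite -Ef Defs.compA Defs.compA -(Defs.compA t g mf) H comp0m.
have [e2 S2] := ses_image hab Hj Hc'' Hm'.
have E2 := Hchi _ _ _ _ _ S2.
by rewrite E1 E2 addrAC.
Qed.
Lemma card_sub (F : finFieldType) m n (A : 'M[F]_(m,n)) :
  #|[set v : 'rV[F]_n | (v <= A)%MS]| = (#|F| ^ \rank A)%N.
Proof.
have -> : [set v : 'rV[F]_n | (v <= A)%MS] =
   [set u *m row_base A | u in [set: 'rV[F]_(\rank A)]].
  apply/setP => v; rewrite inE; apply/idP/imsetP.
  - rewrite -(eq_row_base A) => /submxP [u ->]. by exists u; rewrite ?inE.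
  - case=> u _ ->. by rewrite -(eq_row_base A) submxMl.
rewrite card_imset ?cardsT ?card_mx ?mul1n //.
move=> u1 u2 /eqP; rewrite -subr_eq0 -mulmxBl mulmx_free_eq0 ?row_base_free //.
by rewrite subr_eq0 => /eqP.
Qed.

Lemma part2 (F : finFieldType) (n1 n2 n3 : nat)
     (A : 'M[F]_(n1, n2)) (B : 'M[F]_(n2, n3)) :
   kermx B *m cokermx A = 0 ->
   (#|[set v : 'rV[F]_n2 | (v <= A)%MS]| *
    #|[set w : 'rV[F]_n3 | (w <= B)%MS]|)%N =
   (#|[set: 'rV[F]_n2]| * #|[set u : 'rV[F]_n3 | (u <= A *m B)%MS]|)%N.
Proof.
move=> H; rewrite !card_sub cardsT card_mx mul1n -!expnD; congr (_ ^ _)%N.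
have hk : (kermx B <= A)%MS by rewrite submxE H.
have := mxrank_mul_ker A B; rewrite (capmx_idPr hk) mxrank_ker.
have := rank_leq_row B. move=> h1 <-; by rewrite -addnA subnK // addnC.
Qed.

Theorem propositionA2 :
  (forall (C : preadditive), abelian C ->
   forall (V1 V2 V3 : Ob C) (f : Mor V1 V2) (g : Mor V2 V3)
     (Q : Ob C) (p : Mor V2 Q) (K : Ob C) (i : Mor K V2),
   is_cokernel f p -> is_kernel g i -> mcomp p i = 0 ->
   forall (If Ig Igf : Ob C),
   is_image f If -> is_image g Ig -> is_image (mcomp g f) Igf ->
   K0_eq [:: If; Ig] [:: V2; Igf])
  /\
  (forall (F : finFieldType) (n1 n2 n3 : nat)
     (A : 'M[F]_(n1, n2)) (B : 'M[F]_(n2, n3)),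
   kermx B *m cokermx A = 0 ->
   (#|[set v : 'rV[F]_n2 | (v <= A)%MS]| *
    #|[set w : 'rV[F]_n3 | (w <= B)%MS]|)%N =
   (#|[set: 'rV[F]_n2]| * #|[set u : 'rV[F]_n3 | (u <= A *m B)%MS]|)%N).
Proof. split; [exact: part1 | exact: part2]. Qed.
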